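(* Let $n\geq 5$, let $S$ be the set of all $3$-cycles in $S_n$, let $CAG_n=\mathrm{Cay}(A_n,S)$, and let $G_e$ be the stabilizer of the identity vertex $e$ in $\mathrm{Aut}(CAG_n)$. For $1\leq i<j<k\leq n$ put $\Delta_{i,j,k}=\{(i,j,k),(i,k,j)\}$ and $\Delta=\{\Delta_{i,j,k}\mid 1\leq i<j<k\leq n\}$. Let $L_n$ be the graph with vertex set $\Delta$ in which $\Delta_{i,j,k}$ and $\Delta_{p,q,r}$ are adjacent iff $\{i,j,k\}\cap\{p,q,r\}=\emptyset$. Each $g\in G_e$ permutes the members of $\Delta$ (i.e. maps each $\Delta_{i,j,k}$ onto some member of $\Delta$), giving an action of $G_e$ on $\Delta$; let $K$ be the kernel of this action, so $G_e/K$ is a permutation group on $\Delta$. Then $G_e/K\leq\mathrm{Aut}(L_n)$, i.e. every permutation of $\Delta$ induced by an element of $G_e$ is an automorphism of $L_n$.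
   Context: For a finite group $\Gamma$ and a subset $T\subseteq\Gamma$ with $e\notin T$ and $T=T^{-1}$, the Cayley graph $\mathrm{Cay}(\Gamma,T)$ is the undirected graph with vertex set $\Gamma$ and edge set $\{\{\gamma,t\gamma\}\mid \gamma\in\Gamma, t\in T\}$. Elements of $G_e$ map $S$ (the neighbourhood of $e$) to itself. *)

(* Defs.v *)
From mathcomp Require Import all_boot all_fingroup all_solvable.
Set Implicit Arguments. Unset Strict Implicit. Unset Printing Implicit Defensive.
Local Open Scope group_scope.

Definition is3cycle (n : nat) (t : {perm 'I_n}) : bool :=
  [exists i : 'I_n, exists j : 'I_n, exists k : 'I_n,
     [&& i != j, j != k, i != k,
         t i == j, t j == k, t k == i &
         [forall x : 'I_n, (x \notin [:: i; j; k]) ==> (t x == x)]]].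

Definition S3 (n : nat) : {set {perm 'I_n}} := [set t | is3cycle t].

Definition cag_adj (n : nat) (x y : {perm 'I_n}) : bool :=
  [&& x \in 'Alt_('I_n), y \in 'Alt_('I_n) & (y * x^-1) \in S3 n].

(* f (a permutation of the ambient type stabilising A_n) restricts to an
   automorphism of CAG_n *)
Definition is_cag_aut (n : nat) (f : {perm {perm 'I_n}}) : Prop :=
  f @: 'Alt_('I_n) = 'Alt_('I_n) /\
  forall x y, x \in 'Alt_('I_n) -> y \in 'Alt_('I_n) ->
    cag_adj (f x) (f y) = cag_adj x y.

(* Delta = { Delta_{i,j,k} } with Delta_{i,j,k} = {(i,j,k),(i,k,j)} = {t, t^-1} *)
Definition Delta (n : nat) : {set {set {perm 'I_n}}} :=
  [set [set t; t^-1] | t in S3 n].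

Definition psupp (n : nat) (t : {perm 'I_n}) : {set 'I_n} := [set x | t x != x].

Definition dsupp (n : nat) (D : {set {perm 'I_n}}) : {set 'I_n} :=
  \bigcup_(t in D) psupp t.

Definition L_adj (n : nat) (D1 D2 : {set {perm 'I_n}}) : bool :=
  [&& D1 \in Delta n, D2 \in Delta n & [disjoint dsupp D1 & dsupp D2]].

(* Main.v *)
Require Import Defs.
From mathcomp Require Import all_boot all_fingroup all_solvable.
From mathcomp Require Import zify.
Set Implicit Arguments. Unset Strict Implicit. Unset Printing Implicit Defensive.
Local Open Scope group_scope.

Lemma neqF_sym (T : eqType) (a b : T) : a != b -> (b == a) = false.
Proof. by rewrite eq_sym => /negbTE. Qed.

Ltac simp_eq := repeat (first [progress rewrite ?eqxx /= | match goal with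
 | H : is_true (?a != ?b) |- context[?a == ?b] => rewrite (negbTE H) /=
 | H : is_true (?a != ?b) |- context[?b == ?a] => rewrite (neqF_sym H) /=
 end]); try done.

Notation SS n := (Defs.S3 n).

Ltac add_sym := repeat match goal with H : is_true (?a != ?b) |- _ =>
   lazymatch goal with
   | _ : is_true (b != a) |- _ => fail
   | _ => have ? : b != a by rewrite eq_sym end end.

Ltac split_z z := repeat (simp_eq; match goal with
  |- context [z == ?a] => case: (eqVneq z a) => [?|?]; [subst z|] end); simp_eq.

Lemma tpermE (T : finType) (x y z : T) :
  tperm x y z = if z == x then y else if z == y then x else z.
Proof. by rewrite permE. Qed.

Definition cyc n (i j k : 'I_n) : {perm 'I_n} := locked (tperm i j * tperm i k).

Section Cyc.
Variable n : nat.
Implicit Types i j k x y z : 'I_n.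

Lemma cycE i j k z : i != j -> j != k -> i != k ->
  cyc i j k z = if z == i then j else if z == j then k else if z == k then i else z.
Proof.
move=> ij jk ik; rewrite /cyc -lock permM !tpermE.
add_sym; split_z z.
Qed.

Lemma cyc_even i j k : i != j -> i != k -> cyc i j k \in 'Alt_('I_n).
Proof. by move=> ij ik; rewrite Alt_even /cyc -lock odd_mul_tperm odd_tperm ij ik. Qed.

Lemma cyc_inS i j k : i != j -> j != k -> i != k -> cyc i j k \in SS n.
Proof.
move=> ij jk ik; rewrite inE; apply/existsP; exists i; apply/existsP; exists j;
 apply/existsP; exists k; rewrite ij jk ik !cycE //; add_sym; simp_eq.
apply/forallP => z; rewrite !inE; apply/implyP; rewrite !negb_or => /and3P [zi zj zk].
rewrite cycE //; simp_eq.
Qed.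

Lemma S_cyc t : t \in SS n -> exists i j k,
  [/\ i != j, j != k, i != k & t = cyc i j k].
Proof.
rewrite inE => /existsP [i /existsP [j /existsP [k /andP [ij /andP [jk /andP [ik /andP [/eqP ti /andP [/eqP tj /andP [/eqP tk /forallP H]]]]]]]]].
exists i, j, k; split => //; apply/permP => z; rewrite cycE //.
add_sym; case: (eqVneq z i) => [->|zi]; simp_eq; case: (eqVneq z j) => [->|zj]; simp_eq;
 case: (eqVneq z k) => [->|zk]; simp_eq.
by apply/eqP; have := H z; rewrite !inE (negbTE zi) (negbTE zj) (negbTE zk).
Qed.

Lemma cyc_rot i j k : i != j -> j != k -> i != k -> cyc i j k = cyc j k i.
Proof. move=> ij jk ik; add_sym; apply/permP => z; rewrite !cycE //; split_z z. Qed.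

Lemma cycV i j k : i != j -> j != k -> i != k -> (cyc i j k)^-1 = cyc i k j.
Proof.
move=> ij jk ik; add_sym; apply/eqP; rewrite eq_invg_mul; apply/eqP/permP => z.
rewrite permM perm1 !cycE //; split_z z.
Qed.

Lemma psupp_cyc i j k : i != j -> j != k -> i != k -> psupp (cyc i j k) = [set i; j; k].
Proof.
move=> ij jk ik; add_sym; apply/setP => z; rewrite !inE cycE //; split_z z.
Qed.

Lemma card3 i j k : i != j -> j != k -> i != k -> #|[set i; j; k]| = 3.
Proof.
move=> ij jk ik; rewrite setUC cardsU1 cards2 !inE ij; add_sym; simp_eq.
Qed.

Lemma psuppS t : t \in SS n -> #|psupp t| = 3.
Proof. by case/S_cyc => i [j [k [ij jk ik ->]]]; rewrite psupp_cyc // card3. Qed.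

Lemma psuppV (t : {perm 'I_n}) : psupp t^-1 = psupp t.
Proof.
apply/setP => z; rewrite !inE; congr negb; apply/eqP/eqP => H.
  by rewrite -{1}H permKV.
by rewrite -{1}H permK.
Qed.

Lemma psupp_mul (a b : {perm 'I_n}) :
  (psupp a :\: psupp b) :|: (psupp b :\: psupp a) \subset psupp (a * b).
Proof.
apply/subsetP => z; rewrite !inE permM.
case/orP => /andP [/negPn/eqP H1 H2].
  apply: contra H2 => /eqP H; apply/eqP; apply: (@perm_inj _ b); by rewrite H H1.
by rewrite H1.
Qed.

Lemma K2 (a b : {perm 'I_n}) : a \in SS n -> b \in SS n -> a * b \in SS n ->
  2 <= #|psupp a :&: psupp b|.
Proof.
move=> aS bS abS; have := subset_leq_card (psupp_mul a b).
rewrite psuppS // cardsU !cardsD psuppS // psuppS // [psupp b :&: _]setIC.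
have -> : (psupp a :\: psupp b) :&: (psupp b :\: psupp a) = set0.
  by apply/setP => z; rewrite !inE; case: (a z == z); case: (b z == z).
rewrite cards0; have := subset_leq_card (subsetIl (psupp a) (psupp b)).
rewrite psuppS //; lia.
Qed.

Lemma one_notS : (1 : {perm 'I_n}) \notin SS n.
Proof.
have E : psupp (1 : {perm 'I_n}) = set0 by apply/setP => z; rewrite !inE perm1 eqxx.
by apply/negP => /psuppS; rewrite E cards0.
Qed.

Lemma notS2 (p : {perm 'I_n}) x : p x != x -> p (p x) = x -> p \notin SS n.
Proof.
move=> H1 H2; apply/negP => /S_cyc [i [j [k [ij jk ik E]]]].
move: H1 H2; rewrite E; add_sym; rewrite !cycE //.
case: (eqVneq x i) => [->|?]; simp_eq; first by move=> _ /eqP; simp_eq.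
case: (eqVneq x j) => [->|?]; simp_eq; first by move=> _ /eqP; simp_eq.
case: (eqVneq x k) => [->|?]; simp_eq; first by move=> _ /eqP; simp_eq.
Qed.

Lemma notS4 (p : {perm 'I_n}) a b c d :
  a != b -> a != c -> a != d -> b != c -> b != d -> c != d ->
  p a != a -> p b != b -> p c != c -> p d != d -> p \notin SS n.
Proof.
move=> ab ac ad bc bd cd Ha Hb Hc Hd; apply/negP => /S_cyc [i [j [k [ij jk ik E]]]].
have: [set a; b; c; d] \subset psupp p.
  by apply/subsetP => z; rewrite !inE -!orbA => /or4P [] /eqP ->.
move/subset_leq_card; rewrite E psupp_cyc // card3 // setUC cardsU1 card3 // !inE.
add_sym; simp_eq.
Qed.


Definition adj (a b : {perm 'I_n}) := b * a^-1 \in SS n.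

Lemma adj_refl t : ~~ adj t t.
Proof. by rewrite /adj mulgV one_notS. Qed.

Ltac go := add_sym; apply/permP; let z := fresh "z" in intro z; rewrite permM !cycE //; split_z z.

Lemma AT i j k : i != j -> j != k -> i != k -> adj (cyc i j k) (cyc i j k)^-1.
Proof.
move=> ij jk ik; rewrite /adj cycV //.
have -> : cyc i k j * cyc i k j = cyc i j k by go.
by rewrite cyc_inS.
Qed.

Lemma A3 i j k x : i != j -> j != k -> i != k -> x != i -> x != j -> x != k ->
  adj (cyc i j k) (cyc i j x).
Proof.
move=> ij jk ik xi xj xk; rewrite /adj cycV //.
have -> : cyc i j x * cyc i k j = cyc x k j by go.
by add_sym; rewrite cyc_inS.
Qed.

Lemma A6 i j k x : i != j -> j != k -> i != k -> x != i -> x != j -> x != k ->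
  adj (cyc i j k) (cyc i x k).
Proof.
move=> ij jk ik xi xj xk; rewrite /adj cycV //.
have -> : cyc i x k * cyc i k j = cyc i x j by go.
by add_sym; rewrite cyc_inS.
Qed.

Lemma A4 i j k x : i != j -> j != k -> i != k -> x != i -> x != j -> x != k ->
  ~~ adj (cyc i j k) (cyc i k x).
Proof.
move=> ij jk ik xi xj xk.
rewrite /adj cycV //; add_sym; apply: (@notS2 _ i); rewrite !permM !cycE //; simp_eq.
Qed.

Lemma A5 i j k x : i != j -> j != k -> i != k -> x != i -> x != j -> x != k ->
  ~~ adj (cyc i j k) (cyc i x j).
Proof.
move=> ij jk ik xi xj xk.
rewrite /adj cycV //; add_sym; apply: (@notS2 _ i); rewrite !permM !cycE //; simp_eq.
Qed.

Lemma A7 i j k x y : i != j -> j != k -> i != k -> x != i -> x != j -> x != k ->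
  y != i -> y != j -> y != k -> x != y -> ~~ adj (cyc i j k) (cyc i x y).
Proof.
move=> ij jk ik xi xj xk yi yj yk xy.
rewrite /adj cycV //; add_sym; apply: (@notS4 _ i x y k) => //; rewrite !permM !cycE //; simp_eq.
Qed.


Lemma cyc_of s a : s \in SS n -> a \in psupp s ->
  [/\ a != s a, s a != s (s a), a != s (s a) & s = cyc a (s a) (s (s a))].
Proof.
case/S_cyc => i [j [k [ij jk ik ->]]]; rewrite psupp_cyc // !inE -!orbA.
add_sym; case/or3P => /eqP ->; rewrite !cycE //; simp_eq.
- by rewrite cyc_rot.
- by rewrite cyc_rot // cyc_rot.
Qed.

Lemma fresh (hn : 5 <= n) (a b c d : 'I_n) :
  exists z, [/\ z != a, z != b, z != c & z != d].
Proof.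
pose s := [:: a; b; c; d].
case: (pickP [pred z | z \notin s]) => [z | H].
  by rewrite /= !inE !negb_or => /and4P [? ? ? ?]; exists z.
have : #|'I_n| <= #|s|.
  apply: subset_leq_card; apply/subsetP => z _; have := H z; rewrite /=.
  by case: (z \in s).
rewrite card_ord => h1; have := leq_trans h1 (card_size s); rewrite /=; lia.
Qed.

Definition cn (t s : {perm 'I_n}) := exists w, [/\ w \in SS n, adj t w & adj s w].

Ltac vsubst := match goal with H : ?a = ?b |- _ => subst a end.

Lemma coreB (hn : 5 <= n) i j k s : i != j -> j != k -> i != k ->
  s \in SS n -> i \in psupp s -> adj (cyc i j k) s -> ~ cn (cyc i j k) s ->
  s = (cyc i j k)^-1.
Proof.
move=> ij jk ik sS iS; have [] := cyc_of sS iS.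
move: (s i) (s (s i)) => x y h1 h2 h3 -> A N; add_sym.
case: (eqVneq x j) => [?|xj]; first subst x.
  case: (eqVneq y k) => [?|yk]; first by subst y; rewrite (negbTE (adj_refl _)) in A.
  have [z [zi zj zk zy]] := fresh hn i j k y; add_sym.
  by case: N; exists (cyc i j z); split; [add_sym; rewrite cyc_inS | add_sym; apply: A3 | add_sym; apply: A3].
case: (eqVneq x k) => [?|xk]; first subst x.
  case: (eqVneq y j) => [?|yj]; first by subst y; rewrite cycV.
  by exfalso; move: A; apply/negP; add_sym; apply: A4.
case: (eqVneq y j) => [?|yj]; first by subst y; exfalso; move: A; apply/negP; add_sym; apply: A5.
case: (eqVneq y k) => [?|yk]; first subst y.
  have [z [zi zj zk zx]] := fresh hn i j k x; add_sym.
  by case: N; exists (cyc i z k); split; [add_sym; rewrite cyc_inS | add_sym; apply: A6 | add_sym; apply: A6].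
by exfalso; move: A; apply/negP; add_sym; apply: A7.
Qed.

Lemma coreC i j k s : i != j -> j != k -> i != k ->
  s \in SS n -> i \in psupp s -> s != cyc i j k -> ~~ adj (cyc i j k) s ->
  cn (cyc i j k) s.
Proof.
move=> ij jk ik sS iS; have [] := cyc_of sS iS.
move: (s i) (s (s i)) => x y h1 h2 h3 -> D A; add_sym.
case: (eqVneq x j) => [?|xj]; first subst x.
  case: (eqVneq y k) => [?|yk]; first by subst y; rewrite eqxx in D.
  by move: A; add_sym; rewrite A3.
case: (eqVneq x k) => [?|xk]; first subst x.
  case: (eqVneq y j) => [?|yj]; first by subst y; move: A; rewrite -(cycV ij jk ik) AT.
  exists (cyc i j k)^-1; rewrite cycV //; split; [by add_sym; rewrite cyc_inS | | by add_sym; apply: A3].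
  by rewrite -(cycV ij jk ik) AT.
case: (eqVneq y j) => [?|yj]; first subst y.
  exists (cyc i j k)^-1; rewrite cycV //; split; [by add_sym; rewrite cyc_inS | | by add_sym; apply: A6].
  by rewrite -(cycV ij jk ik) AT.
case: (eqVneq y k) => [?|yk]; first by subst y; move: A; add_sym; rewrite A6.
by exists (cyc i x k); split; [add_sym; rewrite cyc_inS | add_sym; apply: A6 | add_sym; apply: A3].
Qed.

Lemma coreB1 i j k w : i != j -> j != k -> i != k ->
  w \in SS n -> i \in psupp w -> ~~ (adj (cyc i j k) w && adj (cyc i j k)^-1 w).
Proof.
move=> ij jk ik wS iS; have [] := cyc_of wS iS.
move: (w i) (w (w i)) => x y h1 h2 h3 ->; add_sym; rewrite cycV //.
case: (eqVneq x j) => [?|xj]; first subst x.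
  case: (eqVneq y k) => [?|yk]; first by subst y; rewrite (negbTE (adj_refl _)).
  by add_sym; rewrite (negbTE (@A4 i k j y _ _ _ _ _ _)) ?andbF.
case: (eqVneq x k) => [?|xk]; first subst x.
  case: (eqVneq y j) => [?|yj]; first by subst y; rewrite (negbTE (adj_refl _)) andbF.
  by add_sym; rewrite (negbTE (@A4 i j k y _ _ _ _ _ _)).
case: (eqVneq y j) => [?|yj]; first by subst y; add_sym; rewrite (negbTE (@A5 i j k x _ _ _ _ _ _)).
case: (eqVneq y k) => [?|yk]; first by subst y; add_sym; rewrite (negbTE (@A5 i k j x _ _ _ _ _ _)) ?andbF.
by add_sym; rewrite (negbTE (@A7 i j k x y _ _ _ _ _ _ _ _ _ _)).
Qed.

End Cyc.

Section Main.
Variable n : nat.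
Implicit Types t s w : {perm 'I_n}.

Lemma SV t : t \in SS n -> t^-1 \in SS n.
Proof. by case/S_cyc => i [j [k [ij jk ik ->]]]; rewrite cycV // cyc_inS // eq_sym. Qed.

Lemma S_Alt t : t \in SS n -> t \in 'Alt_('I_n).
Proof. by case/S_cyc => i [j [k [ij jk ik ->]]]; rewrite cyc_even. Qed.

Lemma common (A B : {set 'I_n}) : 2 <= #|A :&: B| -> exists2 a, a \in A & a \in B.
Proof.
move=> h; have /card_gt0P [a] : 0 < #|A :&: B| by apply: leq_trans h.
by rewrite inE => /andP [? ?]; exists a.
Qed.

Lemma B_char (hn : 5 <= n) t s : t \in SS n -> s \in SS n ->
  adj t s -> ~ cn t s -> s = t^-1.
Proof.
move=> tS sS A N; have := K2 sS (SV tS) A; rewrite psuppV => /common [a sa ta].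
have [] := cyc_of tS ta; move: (t a) (t (t a)) => j k h1 h2 h3 E; subst t.
exact: coreB.
Qed.

Lemma B_inv t : t \in SS n -> adj t t^-1 /\ ~ cn t t^-1.
Proof.
move=> tS; split; first by case/S_cyc: tS => i [j [k [ij jk ik ->]]]; apply: AT.
case=> w [wS A1 A2]; have := K2 wS (SV tS) A1; rewrite psuppV => /common [a wa ta].
have [] := cyc_of tS ta; move: (t a) (t (t a)) => j k h1 h2 h3 E; subst t.
by have := coreB1 h1 h2 h3 wS wa; rewrite A1 A2.
Qed.

Lemma C_char t s : t \in SS n -> s \in SS n ->
  [disjoint psupp t & psupp s] <-> [/\ s != t, ~~ adj t s & ~ cn t s].
Proof.
move=> tS sS; split.
  rewrite -setI_eq0 => /eqP D; split.
  - apply/eqP => E; subst s; move: D; rewrite setIid => D.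
    by have := psuppS tS; rewrite D cards0.
  - apply/negP => A; have := K2 sS (SV tS) A; rewrite psuppV setIC D cards0.
    by [].
  - case=> w [wS A1 A2]; have h1 := K2 wS (SV tS) A1; have h2 := K2 wS (SV sS) A2.
    rewrite psuppV in h1; rewrite psuppV in h2.
    have h3 : #|(psupp w :&: psupp t) :|: (psupp w :&: psupp s)| <= #|psupp w|.
      by apply: subset_leq_card; rewrite subUset !subsetIl.
    have h4 : #|(psupp w :&: psupp t) :&: (psupp w :&: psupp s)| <= #|psupp t :&: psupp s|.
      apply: subset_leq_card; apply/subsetP => z; rewrite !inE.
      by case/andP => /andP [_ ->] /andP [_ ->].
    move: h3 h4; rewrite cardsU D cards0 psuppS //; lia.
case=> Ne NA NC; rewrite -setI_eq0; apply/negPn/negP => /set0Pn [a].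
rewrite inE => /andP [ta sa].
have [] := cyc_of tS ta; move: (t a) (t (t a)) => j k h1 h2 h3 E; subst t.
by apply: NC; apply: coreC.
Qed.

Lemma dsupp2 t : dsupp [set t; t^-1] = psupp t.
Proof. by rewrite /dsupp bigcup_setU !big_set1 psuppV setUid. Qed.

End Main.

Theorem lemma3p5 (n : nat) (hn : 5 <= n) (f : {perm {perm 'I_n}}) :
  is_cag_aut f -> f 1 = 1 ->
  (forall D, D \in Delta n -> f @: D \in Delta n) /\
  (forall D1 D2, D1 \in Delta n -> D2 \in Delta n ->
     L_adj (f @: D1) (f @: D2) = L_adj D1 D2).
Proof.
move=> [fA fadj] f1.
have fAlt x : x \in 'Alt_('I_n) -> f x \in 'Alt_('I_n) by rewrite -{2}fA => ?; apply: imset_f.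
have fS t : t \in SS n -> f t \in SS n.
  move=> tS; have := fadj 1 t (group1 _) (S_Alt tS).
  by rewrite f1 /cag_adj invg1 !mulg1 group1 (S_Alt tS) tS /= => /andP [_ ->].
have fadjS t s : t \in SS n -> s \in SS n -> adj (f t) (f s) = adj t s.
  move=> tS sS; have := fadj t s (S_Alt tS) (S_Alt sS).
  by rewrite /cag_adj (S_Alt tS) (S_Alt sS) (fAlt _ (S_Alt tS)) (fAlt _ (S_Alt sS)).
have fcn t s : t \in SS n -> s \in SS n -> cn (f t) (f s) <-> cn t s.
  move=> tS sS; split.
    case=> w [wS A1 A2].
    have : w \in f @: 'Alt_('I_n) by rewrite fA S_Alt.
    case/imsetP => w0 w0A E; subst w.
    have w0S : w0 \in SS n.
      have := fadj 1 w0 (group1 _) w0A.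
      by rewrite f1 /cag_adj invg1 !mulg1 group1 w0A (S_Alt wS) wS /= => /esym.
    by exists w0; split => //; rewrite -fadjS.
  by case=> w [wS A1 A2]; exists (f w); split; rewrite ?fS ?fadjS.
have fV t : t \in SS n -> f t^-1 = (f t)^-1.
  move=> tS; have [A N] := B_inv tS; apply: B_char => //; rewrite ?fS ?SV //.
    by rewrite fadjS ?SV.
  by rewrite fcn ?SV.
have fD t s : t \in SS n -> s \in SS n ->
    [disjoint psupp (f t) & psupp (f s)] = [disjoint psupp t & psupp s].
  move=> tS sS; apply/idP/idP.
    move/(C_char (fS _ tS) (fS _ sS)) => [H1 H2 H3]; apply/(C_char tS sS); split.
    - by move: H1; rewrite (inj_eq perm_inj).
    - by rewrite -fadjS.
    - by rewrite -fcn.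
  move/(C_char tS sS) => [H1 H2 H3]; apply/(C_char (fS _ tS) (fS _ sS)); split.
  - by rewrite (inj_eq perm_inj).
  - by rewrite fadjS.
  - by rewrite fcn.
have fD2 t : t \in SS n -> f @: [set t; t^-1] = [set f t; (f t)^-1].
  by move=> tS; rewrite imsetU !imset_set1 fV.
have inD t : t \in SS n -> [set t; t^-1] \in Delta n.
  by move=> tS; apply/imsetP; exists t.
split.
  by move=> D /imsetP [t tS ->]; rewrite fD2 // inD ?fS.
move=> D1 D2 /imsetP [t tS ->] /imsetP [s sS ->].
rewrite /L_adj !fD2 // !inD ?fS // !dsupp2 fD //.
Qed.
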